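(* Let $\rho$ be a growth function, $m\ge1$ and $0\le k\le m$ integers, and $\sigma\in\{-1,1\}^m$ with $|\sigma|=k$. Define $\theta\in\{-1,1\}^m$ by $\theta_i=1$ for $1\le i\le k$ and $\theta_i=-1$ for $k+1\le i\le m$. If $f^\rho_\sigma=(a_\sigma,b_\sigma)$ and $f^\rho_\theta=(a_\theta,b_\theta)$, then $a_\sigma\le a_\theta$ and $b_\sigma=b_\theta$.
   Context: A growth function is an increasing $\rho:\mathbb{R}\to\mathbb{R}^{\ge0}$. Binary strings are elements of $\{-1,1\}^m$ (the empty string $<>$ for $m=0$); $|\sigma|$ is the number of coordinates equal to $1$; $\sigma\wedge u$ denotes concatenation. $f^\rho_\sigma\in\mathbb{R}^2$ is defined recursively: $f^\rho_{<>}=(0,0)$, and if $f^\rho_\sigma=(a,b)$ then $f^\rho_{\sigma\wedge1}=(a+1,b+1)$ and $f^\rho_{\sigma\wedge-1}=(a+\rho(a+b),b-1)$. *)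

(* Defs.v *)
From Stdlib Require Import Reals List.
Import ListNotations.
Open Scope R_scope.

Definition growth_function (rho : R -> R) : Prop :=
  (forall x y, x <= y -> rho x <= rho y) /\ (forall x, 0 <= rho x).

(* Binary strings in {-1,1}^m are lists of length m over bool:
   true encodes the coordinate 1, false encodes -1. *)
Definition bstring := list bool.

Definition weight (s : bstring) : nat := count_occ Bool.bool_dec s true.

Definition fstep (rho : R -> R) (p : R * R) (u : bool) : R * R :=
  let '(a, b) := p in
  if u then (a + 1, b + 1) else (a + rho (a + b), b - 1).

Definition frho (rho : R -> R) (s : bstring) : R * R :=
  fold_left (fstep rho) s (0, 0).

Definition theta (m k : nat) : bstring := repeat true k ++ repeat false (m - k).

(* Main.v *)
Require Import Defs.
From Stdlib Require Import Reals List Lra Lia.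
Open Scope R_scope.

Definition le2 (p q : R * R) := fst p <= fst q /\ snd p = snd q.

Lemma le2_trans p q r : le2 p q -> le2 q r -> le2 p r.
Proof. unfold le2; intros [] []; split; [lra| congruence]. Qed.

Lemma mono rho : growth_function rho -> forall s a a' b, a <= a' ->
  le2 (fold_left (fstep rho) s (a,b)) (fold_left (fstep rho) s (a',b)).
Proof.
  intros [Hm Hp] s; induction s as [|u s IH]; intros a a' b H.
  - simpl; split; simpl; lra.
  - destruct u; simpl; apply IH.
    + lra.
    + pose proof (Hm (a+b) (a'+b) ltac:(lra)); lra.
Qed.

Lemma swap rho : growth_function rho -> forall j r a b,
  le2 (fold_left (fstep rho) (false :: repeat true j ++ repeat false r) (a,b))
      (fold_left (fstep rho) (repeat true j ++ repeat false (S r)) (a,b)).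
Proof.
  intros Hg; pose proof Hg as [Hm Hp].
  induction j as [|j IH]; intros r a b.
  - simpl. split; lra.
  - eapply le2_trans; [|apply (IH r (a+1) (b+1))].
    simpl. replace (b+1-1) with b by ring. replace (b-1+1) with b by ring.
    apply mono; auto.
    pose proof (Hm (a+b) (a+1+(b+1)) ltac:(lra)); lra.
Qed.

Lemma weight_le s : (weight s <= length s)%nat.
Proof. induction s as [|[] s IH]; unfold weight in *; simpl; lia. Qed.

Lemma main rho : growth_function rho -> forall s a a' b, a <= a' ->
  le2 (fold_left (fstep rho) s (a,b))
      (fold_left (fstep rho) (theta (length s) (weight s)) (a',b)).
Proof.
  intros Hg; pose proof Hg as [Hm Hp].
  induction s as [|u s IH]; intros a a' b H.
  - simpl. split; simpl; lra.
  - destruct u.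
    + unfold theta, weight in *; simpl. apply IH; lra.
    + assert (Hw : weight (false :: s) = weight s) by reflexivity.
      rewrite Hw. simpl length.
      eapply le2_trans.
      { simpl. apply (IH _ (a' + rho (a'+b))).
        pose proof (Hm (a+b) (a'+b) ltac:(lra)); lra. }
      pose proof (weight_le s).
      unfold theta.
      replace (S (length s) - weight s)%nat with (S (length s - weight s)) by lia.
      pose proof (swap rho Hg (weight s) (length s - weight s) a' b) as Hs.
      simpl in Hs |- *. exact Hs.
Qed.

Theorem mainTheorem17 (rho : R -> R) (m k : nat) (sigma : bstring) :
  growth_function rho ->
  (1 <= m)%nat -> (k <= m)%nat ->
  length sigma = m -> weight sigma = k ->
  fst (frho rho sigma) <= fst (frho rho (theta m k)) /\
  snd (frho rho sigma) = snd (frho rho (theta m k)).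
Proof.
  intros Hg _ _ Hl Hw. subst. unfold frho.
  apply (main rho Hg sigma 0 0 0). lra.
Qed.
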